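(* Let $A\in\mathbb{R}^{m\times n}_+$ with every row containing a positive entry, $n\ge2$, $(r,c)\in\mathbb{R}^m_{+}\times\mathbb{R}^n_{+}$ with $\langle r,1_m\rangle=\langle c,1_n\rangle$, and $y\in\mathbb{R}^n_{++}$. Order the indices so that $c^{A,r}(y)-c$ is non-decreasing, and let $T$ be a prefix set $\{1,\dots,k\}$, $1\le k\le n-1$, with maximum margin $\gamma$ among such prefix sets. Then \[\gamma^2\ge\frac{1}{2n^3}\|c^{A,r}(y)-c\|_2^2.\]
   Context: For $y\in\mathbb{R}^n_{++}$, $c^{A,r}_j(y):=\sum_{i\in[m]}r_i\frac{A_{ij}y_j}{\sum_{k\in[n]}A_{ik}y_k}$. The margin of $T\subseteq[n]$ is the largest $\gamma\ge0$ such that some $\nu\in\mathbb{R}$ satisfies $\max_{j\in T}(c^{A,r}_j(y)-c_j)\le\nu-\gamma\le\nu+\gamma\le\min_{j\notin T}(c^{A,r}_j(y)-c_j)$. *)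

(* Defs.v *)
From HB Require Import structures.
From mathcomp Require Import all_boot all_order all_algebra all_fingroup.
Set Implicit Arguments. Unset Strict Implicit. Unset Printing Implicit Defensive.
Import Order.TTheory GRing.Theory Num.Theory.
Local Open Scope ring_scope.

Section Defs.
Variable R : realFieldType.

Definition cAr (m n : nat) (A : 'M[R]_(m, n)) (r : 'I_m -> R)
  (y : 'I_n -> R) (j : 'I_n) : R :=
  \sum_(i < m) r i * (A i j * y j / (\sum_(k < n) A i k * y k)).

Definition margin_cond (n : nat) (f : 'I_n -> R) (T : {set 'I_n}) (g : R) : Prop :=
  0 <= g /\ exists nu : R,
    (forall j, j \in T -> f j <= nu - g) /\ nu - g <= nu + g /\
    (forall j, j \notin T -> nu + g <= f j).

Definition is_margin (n : nat) (f : 'I_n -> R) (T : {set 'I_n}) (g : R) : Prop :=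
  margin_cond f T g /\ forall g', margin_cond f T g' -> g' <= g.

End Defs.

Definition prefix_set (n : nat) (s : 'S_n) (k : nat) : {set 'I_n} :=
  [set s i | i : 'I_n & (i < k)%N].

(* Main.v *)
Require Import Defs.
From HB Require Import structures.
From mathcomp Require Import all_boot all_order all_algebra all_fingroup.
From mathcomp Require Import lra ring zify.
Set Implicit Arguments. Unset Strict Implicit.
Import Order.TTheory GRing.Theory Num.Theory.
Local Open Scope ring_scope.

Lemma sum_f0 (R : realFieldType) (m n : nat) (A : 'M[R]_(m, n))
  (hA : forall i j, 0 <= A i j)
  (hrow : forall i, exists j, 0 < A i j)
  (r : 'I_m -> R) (c : 'I_n -> R)
  (hsum : \sum_(i < m) r i = \sum_(j < n) c j)
  (y : 'I_n -> R) (hy : forall j, 0 < y j) :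
  \sum_(j < n) (cAr A r y j - c j) = 0.
Proof.
rewrite sumrB -hsum /cAr exchange_big /=.
rewrite [X in X - _](_ : _ = \sum_(i < m) r i) ?subrr //.
apply: eq_bigr => i _.
rewrite -mulr_sumr -mulr_suml divff ?mulr1 //.
have [j hj] := hrow i.
apply: lt0r_neq0.
rewrite (bigD1 j) //=.
apply: ltr_pwDl; first exact: mulr_gt0.
by apply: sumr_ge0 => k _; rewrite mulr_ge0 // ltW.
Qed.

Lemma step_le (R : realFieldType) (n : nat) (f : 'I_n -> R) (s : 'S_n) (gamma : R)
  (hs : forall i j : 'I_n, (i <= j)%N -> f (s i) <= f (s j))
  (hmax : forall (k : nat) (g : R), (1 <= k)%N -> (k <= n - 1)%N ->
            is_margin f (prefix_set s k) g -> g <= gamma)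
  (a b : 'I_n) (hab : val b = (val a).+1) :
  f (s b) - f (s a) <= 2 * gamma.
Proof.
have hk1 : (1 <= val b)%N by rewrite hab.
have hk2 : (val b <= n - 1)%N by case: (b) => bv hb /=; lia.
have hab' : f (s a) <= f (s b) by apply: hs; rewrite hab.
set g := (f (s b) - f (s a)) / 2.
suff : g <= gamma by rewrite /g; lra.
apply: (hmax (val b)) => //.
have inT : forall i : 'I_n, (s i \in prefix_set s b) = (i < b)%N.
  move=> i; apply/imsetP/idP => [[i' Hi' /perm_inj ->]|Hi].
    by move: Hi'; rewrite inE.
  by exists i => //; rewrite inE.
split.
  split; first by rewrite /g; lra.
  exists ((f (s b) + f (s a)) / 2); split; [|split].
  - move=> j; rewrite -(permKV s j) inT => Hj.
    have : f (s (s^-1 j)%g) <= f (s a) by apply: hs; move: Hj; rewrite hab.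
    rewrite /g; lra.
  - rewrite /g; lra.
  - move=> j; rewrite -(permKV s j) inT -leqNgt => Hj.
    have : f (s b) <= f (s (s^-1 j)%g) by apply: hs.
    rewrite /g; lra.
move=> g' [_ [nu [H1 [_ H3]]]].
have := H1 (s a); rewrite inT hab ltnSn => /(_ isT).
have := H3 (s b); rewrite inT ltnn => /(_ isT).
rewrite /g; lra.
Qed.

Lemma chain_le (R : realFieldType) (n : nat) (f : 'I_n -> R) (s : 'S_n) (gamma : R)
  (hs : forall i j : 'I_n, (i <= j)%N -> f (s i) <= f (s j))
  (hmax : forall (k : nat) (g : R), (1 <= k)%N -> (k <= n - 1)%N ->
            is_margin f (prefix_set s k) g -> g <= gamma) :
  forall d (a b : 'I_n), val b = (val a + d)%N -> f (s b) - f (s a) <= 2 * gamma * d%:R.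
Proof.
elim=> [|d IH] a b hb.
  have -> : b = a by apply: val_inj; rewrite hb addn0.
  by rewrite subrr mulr0.
have hc : (val a + d < n)%N by have := ltn_ord b; rewrite hb; lia.
have := IH a (Ordinal hc) erefl.
have hb' : val b = (val (Ordinal hc)).+1 by rewrite hb /=; lia.
have := @step_le _ _ _ _ _ hs hmax (Ordinal hc) b hb'.
have e : (d.+1)%:R = d%:R + 1 :> R by rewrite natr1.
rewrite e mulrDr mulr1 /=; lra.
Qed.

Lemma diff_bound (R : realFieldType) (n : nat) (f : 'I_n -> R) (s : 'S_n) (gamma : R)
  (hg : 0 <= gamma)
  (hs : forall i j : 'I_n, (i <= j)%N -> f (s i) <= f (s j))
  (hmax : forall (k : nat) (g : R), (1 <= k)%N -> (k <= n - 1)%N ->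
            is_margin f (prefix_set s k) g -> g <= gamma) :
  forall j k : 'I_n, (f j - f k) ^+ 2 <= (2 * gamma * n%:R) ^+ 2.
Proof.
have H : forall a b : 'I_n, (a <= b)%N ->
    0 <= f (s b) - f (s a) <= 2 * gamma * n%:R.
  move=> a b hab.
  have := hs _ _ hab.
  have hba : val b = (val a + (b - a))%N by rewrite subnKC.
  have := @chain_le _ _ _ _ _ hs hmax (b - a)%N a b hba.
  have : (b - a)%N%:R <= n%:R :> R by rewrite ler_nat; have := ltn_ord b; lia.
  have : 0 <= 2 * gamma by lra.
  move=> h2 hd h1 h0.
  have : 2 * gamma * (b - a)%N%:R <= 2 * gamma * n%:R by apply: ler_wpM2l.
  move=> h3; apply/andP; split; lra.
move=> j k.
rewrite -(permKV s j) -(permKV s k).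
set a := (s^-1 j)%g; set b := (s^-1 k)%g.
case: (leqP a b) => hab.
  have /andP[h1 h2] := H _ _ hab; nra.
have /andP[h1 h2] := H _ _ (ltnW hab); nra.
Qed.

Theorem proposition6p5 (R : realFieldType) (m n : nat) (A : 'M[R]_(m, n))
  (hA : forall i j, 0 <= A i j)
  (hrow : forall i, exists j, 0 < A i j)
  (hn : (2 <= n)%N)
  (r : 'I_m -> R) (c : 'I_n -> R)
  (hr : forall i, 0 <= r i) (hc : forall j, 0 <= c j)
  (hsum : \sum_(i < m) r i = \sum_(j < n) c j)
  (y : 'I_n -> R) (hy : forall j, 0 < y j)
  (s : 'S_n)
  (hs : forall i j : 'I_n, (i <= j)%N ->
          cAr A r y (s i) - c (s i) <= cAr A r y (s j) - c (s j))
  (gamma : R)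
  (hgam : exists k : nat, [/\ (1 <= k)%N, (k <= n - 1)%N &
            is_margin (fun j => cAr A r y j - c j) (prefix_set s k) gamma])
  (hmax : forall (k : nat) (g : R), (1 <= k)%N -> (k <= n - 1)%N ->
            is_margin (fun j => cAr A r y j - c j) (prefix_set s k) g -> g <= gamma) :
  1 / (2 * n%:R ^+ 3) * \sum_(j < n) (cAr A r y j - c j) ^+ 2 <= gamma ^+ 2.
Proof.
set f := fun j => cAr A r y j - c j.
have hg : 0 <= gamma by case: hgam => k [_ _ [[]]].
have S0 : \sum_(j < n) f j = 0 by rewrite /f; exact: (@sum_f0 R m n A hA hrow r c hsum y hy).
have hs' : forall i j : 'I_n, (i <= j)%N -> f (s i) <= f (s j) by exact: hs.
have DB := diff_bound hg hs' hmax.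
set F := \sum_(j < n) f j ^+ 2.
have E : forall j, \sum_(k < n) (f j - f k) ^+ 2
    = n%:R * f j ^+ 2 + F - 2 * f j * \sum_(k < n) f k.
  move=> j.
  rewrite (eq_bigr (fun k => (f j ^+ 2 + f k ^+ 2) - 2 * f j * f k)); last first.
    by move=> k _; ring.
  by rewrite sumrB big_split /= sumr_const card_ord -mulr_sumr mulr_natl /F mulr_natl.
have E2 : \sum_(j < n) \sum_(k < n) (f j - f k) ^+ 2 = 2 * n%:R * F.
  rewrite (eq_bigr _ (fun j _ => E j)) S0.
  rewrite (eq_bigr (fun j => n%:R * f j ^+ 2 + F)); last by move=> j _; rewrite mulr0 subr0.
  rewrite big_split /= -mulr_sumr sumr_const card_ord /F -[X in _ + X]mulr_natl; ring.
have B : \sum_(j < n) \sum_(k < n) (f j - f k) ^+ 2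
    <= \sum_(j < n) \sum_(k < n) (2 * gamma * n%:R) ^+ 2.
  by apply: ler_sum => j _; apply: ler_sum => k _; apply: DB.
have K : forall x : R, \sum_(k < n) x = n%:R * x.
  by move=> x; rewrite sumr_const card_ord mulr_natl.
rewrite E2 !K in B.
have Npos : 0 < n%:R :> R by rewrite ltr0n; lia.
have H1 : 2 * n%:R * (F - 2 * n%:R ^+ 3 * gamma ^+ 2) <= 0 :> R.
  rewrite mulrBr; move: B; set N := n%:R; move=> B.
  have -> : 2 * N * (2 * N ^+ 3 * gamma ^+ 2) = N * (N * (2 * gamma * N) ^+ 2) by ring.
  lra.
have H2 : F - 2 * n%:R ^+ 3 * gamma ^+ 2 <= 0.
  by move: H1; rewrite pmulr_rle0 // mulr_gt0.
rewrite mul1r ler_pdivrMl; last by rewrite mulr_gt0 // exprn_gt0.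
rewrite -/F; lra.
Qed.
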